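(* Consider the two-agent series component maintenance game with prior probabilities $p_1,p_2\in(0,1)$ that components $1,2$ work. Then there exist repair costs $C_1,C_2$ for which the Price of Anarchy without subsidy satisfies $\mathrm{PoA}\ge \frac{2}{p_1+p_2}$. More generally, for the $n$-agent series component maintenance game with prior probabilities $p_1,\dots,p_n\in(0,1)$, there exist repair costs $C_1,\dots,C_n$ for which $\mathrm{PoA}\ge \tilde H/\tilde G^{\,n}$, where $\tilde H=\frac{n}{\sum_i 1/p_i}$ and $\tilde G=(\prod_i p_i)^{1/n}$ are the harmonic and geometric means of $p_1,\dots,p_n$.
   Context: Component maintenance game: agent $i\in[n]$ owns component $i$ with random binary state $x_i\in\{0,1\}$ ($1$ = working), the components being independent with $\Pr[x_i=1]=p_i$. Each agent chooses $s_i\in\{0,1\}$ ($1$ = repair, $0$ = do nothing); after the actions the component state is $x_i'=\max\{x_i,s_i\}$. The system state is $\phi(\bm{x}')$ for a fixed Boolean function $\phi$; in the series system $\phi(\bm{x})=x_1\wedge\dots\wedge x_n$. Agent $i$ has repair cost $C_i\in\mathbb{R}$ and expected cost $l_i(s)=C_is_i+1-\mathbb{E}[\phi(\bm{x}'(s))]$; the social cost is $\sum_i l_i(s)$ and $\mathsf{OPT}$ its minimum over joint actions. The Price of Anarchy without subsidy is $\mathrm{PoA}=\max_{s\in\mathcal{S}_{NE}}\mathrm{cost}(s)/\mathsf{OPT}$, where $\mathcal{S}_{NE}$ is the set of pure Nash equilibria. *)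

(* Defs.v *)
From HB Require Import structures.
From mathcomp Require Import all_boot all_order all_algebra.
From mathcomp Require Import reals exp.
Set Implicit Arguments. Unset Strict Implicit. Unset Printing Implicit Defensive.
Import Order.TTheory GRing.Theory Num.Theory.
Local Open Scope ring_scope.

Section Game.
Variables (R : realType) (n : nat).

(* joint action profiles / component state vectors *)
Definition profile := {ffun 'I_n -> bool}.

Definition series (x : profile) : bool := [forall i, x i].

Definition post (x s : profile) : profile := [ffun i => x i || s i].

Definition prob_state (p : 'I_n -> R) (x : profile) : R :=
  \prod_(i < n) (if x i then p i else 1 - p i).

Definition Ephi (phi : profile -> bool) (p : 'I_n -> R) (s : profile) : R :=
  \sum_(x : profile) prob_state p x * (phi (post x s))%:R.

Definition lcost (phi : profile -> bool) (p C : 'I_n -> R) (i : 'I_n)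
  (s : profile) : R := C i * (s i)%:R + 1 - Ephi phi p s.

Definition social_cost phi p C (s : profile) : R :=
  \sum_(i < n) lcost phi p C i s.

(* OPT: minimum social cost over all joint actions (the default element is
   itself a joint action, so this is the exact minimum) *)
Definition OPT phi p C : R :=
  \big[Num.min/social_cost phi p C [ffun=> false]]_(s : profile)
     social_cost phi p C s.

Definition deviate (s : profile) (i : 'I_n) (b : bool) : profile :=
  [ffun j => if j == i then b else s j].

Definition is_NE phi p C (s : profile) : bool :=
  [forall i, forall b : bool,
     lcost phi p C i s <= lcost phi p C i (deviate s i b)].

Definition PoA phi p C : R :=
  \big[Num.max/0]_(s : profile | is_NE phi p C s)
     (social_cost phi p C s / OPT phi p C).

Definition harm_mean (p : 'I_n -> R) : R := n%:R / \sum_(i < n) (p i)^-1.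
Definition geom_mean (p : 'I_n -> R) : R :=
  powR (\prod_(i < n) p i) (n%:R)^-1.

End Game.

(* Main.v *)
Require Import Defs.
From HB Require Import structures.
From mathcomp Require Import all_boot all_order all_algebra.
From mathcomp Require Import reals exp.
From mathcomp Require Import ring lra.
Import Order.TTheory GRing.Theory Num.Theory.
Local Open Scope ring_scope.

Section S.
Variable R : realType.

Lemma prod_ind n (b : 'I_n -> bool) :
  \prod_(i < n) ((b i)%:R : R) = ([forall i, b i])%:R.
Proof.
case: (boolP [forall i, b i]) => [/forallP H|/forallP H].
  by rewrite big1 // => i _; rewrite H.
have [i Hi] : exists i, ~~ b i.
  apply/existsP; rewrite -negb_forall; apply/negP => /forallP; exact: H.
by rewrite (bigD1 i) //= (negbTE Hi) mul0r.
Qed.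

Lemma Ephi_series n (p : 'I_n -> R) (s : profile n) :
  Ephi (@series n) p s = \prod_i (if s i then 1 else p i).
Proof.
rewrite /Ephi.
have E : \prod_(i < n) \sum_(b : bool) ((if b then p i else 1 - p i) * (b || s i)%:R)
  = \sum_(x : {ffun 'I_n -> bool}) \prod_i ((if x i then p i else 1 - p i) * (x i || s i)%:R)
  by rewrite bigA_distr_bigA.
transitivity (\prod_(i < n) \sum_(b : bool) ((if b then p i else 1 - p i) * (b || s i)%:R)).
  rewrite E; apply: eq_bigr => x _.
  rewrite big_split /= /prob_state /series prod_ind; congr (_ * _); congr (_%:R); congr (nat_of_bool _).
  by apply/idP/idP => /forallP H; apply/forallP => i; move: (H i); rewrite ffunE.
apply: eq_bigr => i _; rewrite big_bool /=.
by case: (s i) => /=; rewrite ?mulr1 ?mulr0 ?addr0 // addrC subrK.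
Qed.

Lemma le_bigmax (I : eqType) (r : seq I) (P : pred I) (F : I -> R) x i :
  i \in r -> P i -> F i <= \big[Num.max/x]_(j <- r | P j) F j.
Proof.
elim: r => [//|a r IH]; rewrite inE big_cons => /orP [/eqP <- Pi|ir Pi].
  by rewrite Pi le_max lexx.
case: (P a); last exact: IH.
by rewrite le_max IH // orbT.
Qed.

Lemma ge_bigmin (I : eqType) (r : seq I) (P : pred I) (F : I -> R) x i :
  i \in r -> P i -> \big[Num.min/x]_(j <- r | P j) F j <= F i.
Proof.
elim: r => [//|a r IH]; rewrite inE big_cons => /orP [/eqP <- Pi|ir Pi].
  by rewrite Pi ge_min lexx.
case: (P a); last exact: IH.
by rewrite ge_min IH // orbT.
Qed.


Lemma main n (p : 'I_n -> R) : (0 < n)%N -> (forall i, 0 < p i < 1) ->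
  exists C : 'I_n -> R,
    0 < OPT (@series n) p C /\
    harm_mean p / geom_mean p ^+ n <= PoA (@series n) p C.
Proof.
move=> n0 hp.
have p0 i : 0 < p i by case/andP: (hp i).
have p1 i : p i < 1 by case/andP: (hp i).
set P := \prod_(j < n) p j.
pose Q i := \prod_(j < n | j != i) p j.
have hPQ i : P = p i * Q i by rewrite /P (bigD1 i).
have Q0 i : 0 < Q i by apply: prodr_gt0 => j _.
have Q1 i : Q i <= 1 by apply: prodr_ile1 => j _; rewrite (ltW (p0 j)) (ltW (p1 j)).
have P0 : 0 < P by apply: prodr_gt0 => j _.
have PQ i : P < Q i by rewrite (hPQ i) -[ltRHS]mul1r ltr_pM2r.
exists (fun i => Q i - P).
set C := fun i => Q i - P.
have Epos i s : 0 < lcost (@series n) p C i s.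
  rewrite /lcost Ephi_series (bigD1 i) //=.
  set rest := \prod_(j < n | j != i) _.
  have r0 : 0 <= rest by rewrite /rest; apply: prodr_ge0 => j _; case: (s j) => //; exact: ltW.
  have r1 : rest <= 1.
    by rewrite /rest; apply: prodr_ile1 => j _; case: (s j); rewrite ?ler01 ?lexx // (ltW (p0 j)) (ltW (p1 j)).
  have := PQ i; have := p0 i; have := p1 i; rewrite /C.
  case: (s i) => /= *; nra.
have cpos s : 0 < social_cost (@series n) p C s.
  rewrite /social_cost (bigD1 (Ordinal n0)) //=.
  apply: (lt_le_trans (Epos (Ordinal n0) s)); rewrite lerDl.
  by apply: sumr_ge0 => j _; exact: ltW.
set s0 : profile n := [ffun=> false].
set s1 : profile n := [ffun=> true].
have E0 : Ephi (@series n) p s0 = P by rewrite Ephi_series; apply: eq_bigr => j _; rewrite ffunE.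
have E1 : Ephi (@series n) p s1 = 1 by rewrite Ephi_series; apply: big1 => j _; rewrite ffunE.
have c0 : social_cost (@series n) p C s0 = n%:R * (1 - P).
  rewrite /social_cost (eq_bigr (fun _ => 1 - P)); last first.
    by move=> j _; rewrite /lcost E0 ffunE mulr0 add0r.
  by rewrite sumr_const card_ord mulr_natl.
set T := \sum_(i < n) Q i.
have c1 : social_cost (@series n) p C s1 = T - n%:R * P.
  rewrite /social_cost (eq_bigr (fun i => Q i - P)); last first.
    by move=> j _; rewrite /lcost E1 ffunE mulr1 addrK.
  by rewrite sumrB sumr_const card_ord mulr_natl.
have NE0 : is_NE (@series n) p C s0.
  apply/forallP => i; apply/forallP => b.
  rewrite /lcost E0 !ffunE eqxx /= mulr0 add0r.
  case: b; last first.
    rewrite Ephi_series (eq_bigr p) ?mulr0 ?add0r // => j _; rewrite !ffunE.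
    by case: (j == i).
  rewrite Ephi_series (bigD1 i) //= !ffunE eqxx mul1r.
  rewrite (eq_bigr p); last by move=> j /negbTE ji; rewrite !ffunE ji.
  rewrite -/(Q i) /C mulr1; lra.
have OPT0 : 0 < OPT (@series n) p C.
  by rewrite /OPT; apply: (big_ind (fun x => 0 < x)) => // x y hx hy; rewrite lt_min hx hy.
have OPT1 : OPT (@series n) p C <= T - n%:R * P.
  by rewrite -c1 /OPT; apply: ge_bigmin => //; exact: mem_index_enum.
have PoA0 : social_cost (@series n) p C s0 / OPT (@series n) p C <= PoA (@series n) p C.
  by rewrite /PoA; apply: (@le_bigmax _ _ _ _ _ s0) => //; exact: mem_index_enum.
split => //.
apply: le_trans PoA0.
have Tpos : 0 < T - n%:R * P by rewrite -c1.
have Tn : T <= n%:R.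
  rewrite /T -[n in n%:R]card_ord -sumr_const; apply: ler_sum => i _; exact: Q1.
have TP : (\sum_(i < n) (p i)^-1) * P = T.
  rewrite mulr_suml; apply: eq_bigr => i _; rewrite (hPQ i) mulrA mulVf ?mul1r //; exact: lt0r_neq0.
have G : geom_mean p ^+ n = P.
  rewrite /geom_mean -powR_mulrn ?powR_ge0 // -powRrM mulVf ?powRr1 //; last first.
    by rewrite pnatr_eq0 -lt0n.
  exact: ltW.
rewrite G /harm_mean -mulrA -invfM TP c0.
apply: (@le_trans _ _ (n%:R * (1 - P) / (T - n%:R * P))).
  have nP : 0 <= n%:R * P by apply: mulr_ge0; [exact: ler0n | exact: ltW].
  have T0 : 0 < T by lra.
  rewrite -subr_ge0.
  have -> : n%:R * (1 - P) / (T - n%:R * P) - n%:R / T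
     = n%:R * P * (n%:R - T) / (T * (T - n%:R * P)).
    by field; apply/andP; split; apply: lt0r_neq0.
  apply: divr_ge0; last by apply: mulr_ge0; exact: ltW.
  by apply: mulr_ge0; [apply: mulr_ge0; [exact: ler0n | exact: ltW] | lra].
apply: ler_wpM2l; first by apply: mulr_ge0; [exact: ler0n | rewrite subr_ge0; apply: prodr_ile1 => j _; rewrite (ltW (p0 j)) (ltW (p1 j))].
by rewrite lef_pV2 ?posrE.
Qed.


Lemma two_case (p : 'I_2 -> R) : (forall i, 0 < p i < 1) ->
  harm_mean p / geom_mean p ^+ 2 = 2 / (p ord0 + p ord_max).
Proof.
move=> hp.
have p0 i : 0 < p i by case/andP: (hp i).
have G : geom_mean p ^+ 2 = \prod_(i < 2) p i.
  rewrite /geom_mean -powR_mulrn ?powR_ge0 // -powRrM mulVf ?powRr1 //.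
    by apply: prodr_ge0 => j _; exact: ltW.
  by rewrite pnatr_eq0.
rewrite G /harm_mean !big_ord_recr !big_ord0 /= !add0r !mul1r.
have a0 := lt0r_neq0 (p0 ord0); have a1 := lt0r_neq0 (p0 ord_max).
have e0 : (widen_ord (leqnSn 1) ord_max : 'I_2) = ord0 by apply: val_inj.
have e1 : (ord_max : 'I_2) = ord_max by [].
rewrite e0.
have s0 : p ord0 + p ord_max != 0 by apply: lt0r_neq0; apply: addr_gt0.
by field; rewrite a0 a1 s0.
Qed.

End S.

Theorem proposition2 (R : realType) :
  (forall p : 'I_2 -> R, (forall i, 0 < p i < 1) ->
     exists C : 'I_2 -> R,
       0 < OPT (@series 2) p C /\
       2 / (p ord0 + p ord_max) <= PoA (@series 2) p C) /\
  (forall (n : nat) (p : 'I_n -> R), (0 < n)%N -> (forall i, 0 < p i < 1) ->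
     exists C : 'I_n -> R,
       0 < OPT (@series n) p C /\
       harm_mean p / geom_mean p ^+ n <= PoA (@series n) p C).
Proof.
split; last by move=> n p; exact: main.
move=> p hp; have [C [h1 h2]] := @main R 2 p isT hp.
by exists C; rewrite -two_case.
Qed.
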